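(* Consider a multi-task model with $M$ tasks. Let $\Phi(W;x)\in\mathbb{R}^p$ be a shared representation of input $x$, differentiable in the shared parameters $W\in\mathbb{R}^d$, with Jacobian $\nabla_W\Phi(W;x)\in\mathbb{R}^{p\times d}$; let $\phi=(\phi_1,\dots,\phi_M)$ be task-specific parameters, and for each $m$ let $f_m(\Phi,\phi_m;y)$ be a loss differentiable in $\Phi$. Let $\mathcal{D}$ be a distribution over pairs $(x,y)$ for which $\mathbb{E}_{(x,y)\sim\mathcal{D}}[\nabla_W\Phi(W;x)]$ exists, and let $\mathcal{B}$ be a finite batch of pairs $(x,y)$. Define, for each $m$, \[ g^W_m=\frac{1}{|\mathcal{B}|}\sum_{(x,y)\in\mathcal{B}}\nabla_W\Phi(W;x)^\top\nabla_\Phi f_m(\Phi(W;x),\phi_m;y)\in\mathbb{R}^d, \qquad g^\Phi_m=\frac{1}{|\mathcal{B}|}\sum_{(x,y)\in\mathcal{B}}\nabla_\Phi f_m(\Phi(W;x),\phi_m;y)\in\mathbb{R}^p, \] (the parameter gradient and the representation gradient of the batch loss of task $m$), and let $\nabla_W F\in\mathbb{R}^{d\times M}$ and $\nabla_\Phi F\in\mathbb{R}^{p\times M}$ be the matrices with columns $g^W_m$ and $g^\Phi_m$ respectively. For $\lambda\in\Delta^M$ define the residual \[ R_{\mathcal{B}}=\sum_{m=1}^M\sum_{(x,y)\in\mathcal{B}}\frac{\lambda_m}{|\mathcal{B}|}\Big(\nabla_W\Phi(W;x)-\mathbb{E}_{(x',y')\sim\mathcal{D}}[\nabla_W\Phi(W;x')]\Big)^\top\nabla_\Phi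 f_m(\Phi(W;x),\phi_m;y). \] Suppose there exist $\lambda\in\Delta^M$ and $\ell,\epsilon,\delta>0$ such that \[ \big\|\mathbb{E}_{(x,y)\sim\mathcal{D}}[\nabla_W\Phi(W;x)]\big\|_2\le\ell,\qquad \|\nabla_\Phi F\,\lambda\|\le\epsilon,\qquad \|R_{\mathcal{B}}\|\le\delta . \] Then $\|\nabla_W F\,\lambda\|\le \ell\epsilon+\delta$.
   Context: $\Delta^M=\{\lambda\in\mathbb{R}^M:\lambda_i\ge0,\ \sum_i\lambda_i=1\}$ is the probability simplex. $\|\cdot\|$ is the Euclidean norm of a vector and $\|\cdot\|_2$ the spectral norm of a matrix. $\nabla_\Phi f_m(\Phi,\phi_m;y)$ is the gradient of $f_m$ with respect to its first argument. *)

(* Defs.v *)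
From HB Require Import structures.
From mathcomp Require Import all_boot all_order all_algebra.
From mathcomp Require Import all_classical all_reals all_analysis.
Set Implicit Arguments. Unset Strict Implicit. Unset Printing Implicit Defensive.
Import Order.TTheory GRing.Theory Num.Theory.
Import numFieldNormedType.Exports.
Local Open Scope classical_set_scope.
Local Open Scope ring_scope.

Definition enorm (R : realType) (n : nat) (v : 'cV[R]_n) : R :=
  Num.sqrt (\sum_(i < n) v i 0 ^+ 2).

Definition specnorm (R : realType) (m n : nat) (A : 'M[R]_(m, n)) : R :=
  sup [set enorm (A *m v) | v in [set v : 'cV[R]_n | enorm v <= 1]].

Definition simplex (R : realType) (M : nat) : set 'cV[R]_M :=
  [set l | (forall i, 0 <= l i 0) /\ \sum_(i < M) l i 0 = 1].

(* gradient of a scalar function on 'rV_p, as a column vector 'cV_p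
   (the mathcomp-analysis jacobian of the 'rV_1-valued function) *)
Definition grad (R : realType) (p : nat) (f : 'rV[R]_p -> R) (u : 'rV[R]_p)
  : 'cV[R]_p := jacobian (fun v => (f v)%:M : 'rV[R]_1) u.

Definition expect_mx (R : realType) (dT : measure_display) (T : measurableType dT)
  (P : probability T R) (m n : nat) (A : T -> 'M[R]_(m, n)) : 'M[R]_(m, n) :=
  \matrix_(i, j) fine (\int[P]_z (A z i j)%:E)%E.

(* Main.v *)
Require Import Defs.
From HB Require Import structures.
From mathcomp Require Import all_boot all_order all_algebra.
From mathcomp Require Import all_classical all_reals all_analysis.
Import Order.TTheory GRing.Theory Num.Theory.
Import numFieldNormedType.Exports.
Local Open Scope classical_set_scope.
Local Open Scope ring_scope.

From mathcomp Require Import ring lra.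
Set Implicit Arguments. Unset Strict Implicit.

Section S.
Variable R : realType.

Definition dot {n} (u v : 'cV[R]_n) : R := (u^T *m v) 0 0.

Lemma dotE n (u v : 'cV[R]_n) : dot u v = \sum_i u i 0 * v i 0.
Proof. by rewrite /dot mxE; apply: eq_bigr => i _; rewrite mxE. Qed.

Lemma dotC n (u v : 'cV[R]_n) : dot u v = dot v u.
Proof. by rewrite !dotE; apply: eq_bigr => i _; rewrite mulrC. Qed.

Lemma dot_ge0 n (u : 'cV[R]_n) : 0 <= dot u u.
Proof. by rewrite dotE; apply: sumr_ge0 => i _; rewrite -expr2 sqr_ge0. Qed.

Lemma enorm_dot n (u : 'cV[R]_n) : enorm u = Num.sqrt (dot u u).
Proof. by rewrite /enorm dotE; congr Num.sqrt; apply: eq_bigr => i _; rewrite expr2. Qed.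

Lemma enorm_ge0 n (u : 'cV[R]_n) : 0 <= enorm u.
Proof. by rewrite enorm_dot sqrtr_ge0. Qed.

Lemma enorm_sqr n (u : 'cV[R]_n) : enorm u ^+ 2 = dot u u.
Proof. by rewrite enorm_dot sqr_sqrtr // dot_ge0. Qed.

Lemma dot_mx n m (A : 'M[R]_(n, m)) x y : dot x (A *m y) = dot (A^T *m x) y.
Proof. by rewrite /dot trmx_mul trmxK mulmxA. Qed.

Lemma dotDl n (u v w : 'cV[R]_n) : dot (u + v) w = dot u w + dot v w.
Proof. by rewrite /dot linearD /= mulmxDl mxE. Qed.

Lemma CS2 n (u v : 'cV[R]_n) : dot u v ^+ 2 <= dot u u * dot v v.
Proof.
have H : 0 <= \sum_i \sum_j (u i 0 * v j 0 - u j 0 * v i 0) ^+ 2.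
  by apply: sumr_ge0 => i _; apply: sumr_ge0 => j _; apply: sqr_ge0.
have E : \sum_i \sum_j (u i 0 * v j 0 - u j 0 * v i 0) ^+ 2
   = 2 * (dot u u * dot v v) - 2 * dot u v ^+ 2.
  have E1 : forall i j, (u i 0 * v j 0 - u j 0 * v i 0) ^+ 2 =
     (u i 0 * u i 0) * (v j 0 * v j 0) + (u j 0 * u j 0) * (v i 0 * v i 0)
     - 2 * ((u i 0 * v i 0) * (u j 0 * v j 0)).
    by move=> i j; ring.
  have D : forall (F G : 'I_n -> R), \sum_i \sum_j F i * G j = (\sum_i F i) * (\sum_i G i).
    by move=> F G; rewrite big_distrlr.
  under eq_bigr => i _ do (under eq_bigr => j _ do rewrite E1; rewrite sumrB big_split /=).
  rewrite sumrB big_split /= D exchange_big /= D.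
  have D2 : forall (F G : 'I_n -> R), \sum_i \sum_j 2 * (F i * G j) = 2 * ((\sum_i F i) * (\sum_i G i)).
    by move=> F G; rewrite big_distrlr mulr_sumr; apply: eq_bigr => i _; rewrite mulr_sumr.
  rewrite D2 !dotE expr2.
  ring.
rewrite E in H.
lra.
Qed.


Lemma CS n (u v : 'cV[R]_n) : dot u v <= enorm u * enorm v.
Proof.
rewrite !enorm_dot -sqrtrM ?dot_ge0 //.
apply: le_trans (ler_norm _) _.
by rewrite -sqrtr_sqr ler_wsqrtr // CS2.
Qed.

Lemma sq_le (a b : R) : 0 <= a -> 0 <= b -> a ^+ 2 <= b ^+ 2 -> a <= b.
Proof. move=> ha hb h; rewrite !expr2 in h; nra. Qed.

Lemma enormD n (u v : 'cV[R]_n) : enorm (u + v) <= enorm u + enorm v.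
Proof.
apply: sq_le; rewrite ?addr_ge0 ?enorm_ge0 //.
rewrite enorm_sqr !dotDl ![dot _ (u + v)]dotC !dotDl (dotC v u).
have := CS u v; rewrite sqrrD !enorm_sqr mulr2n; lra.
Qed.

Lemma enorm0 n : enorm (0 : 'cV[R]_n) = 0.
Proof. by rewrite /enorm big1 ?sqrtr0 // => i _; rewrite mxE expr0n. Qed.

Lemma enormZ n (c : R) (u : 'cV[R]_n) : enorm (c *: u) = `|c| * enorm u.
Proof.
rewrite /enorm -sqrtr_sqr -sqrtrM ?sqr_ge0 // mulr_sumr; congr Num.sqrt.
by apply: eq_bigr => i _; rewrite mxE exprMn.
Qed.

Definition frob n m (A : 'M[R]_(n, m)) := \sum_i \sum_j A i j ^+ 2.

Lemma frob_ge0 n m (A : 'M[R]_(n, m)) : 0 <= frob A.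
Proof. by apply: sumr_ge0 => i _; apply: sumr_ge0 => j _; apply: sqr_ge0. Qed.

Lemma frob_bound n m (A : 'M[R]_(n, m)) w : enorm (A *m w) <= Num.sqrt (frob A) * enorm w.
Proof.
apply: sq_le; rewrite ?mulr_ge0 ?sqrtr_ge0 ?enorm_ge0 //.
rewrite !enorm_sqr exprMn sqr_sqrtr ?frob_ge0 // enorm_sqr dotE /frob mulr_suml.
apply: ler_sum => i _.
have -> : (A *m w) i 0 = dot (row i A)^T w.
  by rewrite dotE mxE; apply: eq_bigr => j _; rewrite !mxE.
have -> : \sum_j A i j ^+ 2 = dot (row i A)^T (row i A)^T.
  by rewrite dotE; apply: eq_bigr => j _; rewrite !mxE expr2.
by rewrite -expr2 CS2.
Qed.

Lemma spec_ub n m (A : 'M[R]_(n, m)) :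
  has_ubound [set enorm (A *m v) | v in [set v : 'cV[R]_m | enorm v <= 1]].
Proof.
exists (Num.sqrt (frob A)) => _ [v hv <-].
apply: le_trans (frob_bound A v) _.
by rewrite ler_piMr ?sqrtr_ge0.
Qed.

Lemma spec_ge0 n m (A : 'M[R]_(n, m)) : 0 <= specnorm A.
Proof.
apply: (ub_le_sup (spec_ub A)); exists 0; rewrite /= ?enorm0 ?ler01 //.
by rewrite mulmx0 enorm0.
Qed.

Lemma spec_bound n m (A : 'M[R]_(n, m)) w : enorm (A *m w) <= specnorm A * enorm w.
Proof.
have [h0|hpos] := eqVneq (enorm w) 0.
  have := frob_bound A w; rewrite h0 !mulr0 => h.
  by apply: le_trans h _.
have hp : 0 < enorm w by rewrite lt0r hpos enorm_ge0.
set c := (enorm w)^-1.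
have hc : enorm (c *: w) = 1 by rewrite enormZ ger0_norm ?invr_ge0 ?enorm_ge0 // mulVf.
have hs : enorm (A *m (c *: w)) <= specnorm A.
  by apply: (ub_le_sup (spec_ub A)); exists (c *: w) => //=; rewrite hc.
rewrite -scalemxAr enormZ ger0_norm ?invr_ge0 ?enorm_ge0 // in hs.
rewrite -ler_pdivrMr // mulrC.
exact: hs.
Qed.

Lemma spec_boundT n m (A : 'M[R]_(n, m)) u : enorm (A^T *m u) <= specnorm A * enorm u.
Proof.
set e := enorm (A^T *m u).
have h1 : e ^+ 2 <= enorm u * (specnorm A * e).
  rewrite /e enorm_sqr -dot_mx.
  apply: le_trans (CS _ _) _.
  by apply: ler_wpM2l; [apply: enorm_ge0 | apply: spec_bound].
have he : 0 <= e by apply: enorm_ge0.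
have [e0|enz] := eqVneq e 0.
  by rewrite e0 mulr_ge0 ?spec_ge0 ?enorm_ge0.
have ep : 0 < e by rewrite lt0r enz he.
rewrite expr2 mulrA [enorm u * _]mulrC in h1.
by rewrite -(ler_pM2r ep).
Qed.
End S.

Unset Implicit Arguments.
Theorem theorem1 (R : realType) (M d p : nat)
  (dX dY : measure_display) (X : measurableType dX) (Y : measurableType dY)
  (Theta : Type)
  (Phi : 'rV[R]_d -> X -> 'rV[R]_p)            (* shared representation Phi(W;x) *)
  (f : 'I_M -> 'rV[R]_p -> Theta -> Y -> R)     (* task losses f_m(Phi, phi_m; y) *)
  (W : 'rV[R]_d) (phi : 'I_M -> Theta)
  (D : probability (X * Y)%type R) (B : seq (X * Y)%type)
  (HPhi : forall x, differentiable (fun w => Phi w x) W)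
  (Hf : forall m (u : 'rV[R]_p) y, differentiable (fun v => f m v (phi m) y) u)
  (HE : forall i j, D.-integrable setT
          (fun z : (X * Y)%type => ((jacobian (fun w => Phi w z.1) W)^T i j)%:E))
  (lambda : 'cV[R]_M) (l eps delta : R) :
  let JPhi (x : X) : 'M[R]_(p, d) := (jacobian (fun w => Phi w x) W)^T in
  let EJ : 'M[R]_(p, d) := expect_mx D (fun z : (X * Y)%type => JPhi z.1) in
  let gf (m : 'I_M) (z : (X * Y)%type) : 'cV[R]_p :=
      grad (fun v => f m v (phi m) z.2) (Phi W z.1) in
  let nB : R := (size B)%:R in
  let gW (m : 'I_M) : 'cV[R]_d := nB^-1 *: \sum_(z <- B) (JPhi z.1)^T *m gf m z in
  let gPhi (m : 'I_M) : 'cV[R]_p := nB^-1 *: \sum_(z <- B) gf m z in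
  let gradWF : 'M[R]_(d, M) := \matrix_(i, m) gW m i 0 in
  let gradPhiF : 'M[R]_(p, M) := \matrix_(i, m) gPhi m i 0 in
  let RB : 'cV[R]_d := \sum_(m < M) \sum_(z <- B)
      (lambda m 0 / nB) *: ((JPhi z.1 - EJ)^T *m gf m z) in
  (@simplex R M lambda) -> 0 < l -> 0 < eps -> 0 < delta ->
  specnorm EJ <= l -> enorm (gradPhiF *m lambda) <= eps -> enorm RB <= delta ->
  enorm (gradWF *m lambda) <= l * eps + delta.
Proof.
move=> JPhi EJ gf nB gW gPhi gradWF gradPhiF RB hsimp hl heps hdel hspec hphi hRB.
have mxlam : forall k (g : 'I_M -> 'cV[R]_k),
    (\matrix_(i, m) g m i 0) *m lambda = \sum_m lambda m 0 *: g m.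
  move=> k g; apply/matrixP => i j; rewrite summxE (ord1 j) !mxE.
  by apply: eq_bigr => m _; rewrite !mxE mulrC.
have Hid : gradWF *m lambda = RB + EJ^T *m (gradPhiF *m lambda).
  rewrite /gradWF /gradPhiF !mxlam /RB /gW /gPhi.
  rewrite mulmx_sumr -big_split /=; apply: eq_bigr => m _.
  rewrite -!scalemxAr mulmx_sumr !scaler_sumr -big_split; apply: eq_bigr => z _.
  by rewrite linearB /= mulmxBl !scalerA scalerBr subrK.
rewrite Hid; apply: le_trans (enormD _ _) _; rewrite addrC; apply: lerD; last exact: hRB.
apply: le_trans (spec_boundT _ _) _.
apply: le_trans (ler_wpM2r (enorm_ge0 _) hspec) _.
exact: (ler_wpM2l (ltW hl) hphi).
Qed.
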